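(* Let $(y_i,x_i)$, $i=1,\dots,n$, $y_i\in\mathbb{R}^q$, $x_i\in\mathbb{R}^p$, be data, let $\rho_1$ be a differentiable $\rho$-function with $\psi_1=\rho_1'$ and $W(u)=\psi_1(u)/u$, and let $\hat\sigma_n>0$ be a fixed scale. Consider the iteration: start with $B^{(0)}\in\mathbb{R}^{p\times q}$ and $\Sigma^{(0)}=\hat\sigma_n^2\Gamma^{(0)}$ with $\Gamma^{(0)}\in\mathcal{S}_q$, $|\Gamma^{(0)}|=1$; given $(B^{(k)},\Sigma^{(k)})$, set $\omega_{ik}=W(d_i(B^{(k)},\Sigma^{(k)}))$, let $B^{(k+1)}$ be the weighted least squares fit obtained by computing each column of $B$ separately by weighted least squares with weights $\omega_{ik}$ (i.e. $B^{(k+1)}$ minimizes $\sum_i\omega_{ik}\|y_i-B'x_i\|^2$), let $C^{(k+1)}=\sum_{i=1}^n\omega_{ik}(y_i-B^{(k+1)\prime}x_i)(y_i-B^{(k+1)\prime}x_i)'$ and $\Sigma^{(k+1)}=\hat\sigma_n^2C^{(k+1)}/|C^{(k+1)}|^{1/q}$. If $W(u)$ is nonincreasing in $|u|$, then at each iteration the function $\sum_{i=1}^n\rho_1(d_i(B^{(k)},\Sigma^{(k)}))$ is nonincreasing in $k$.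
   Context: $\mathcal{S}_q$ is the set of positive definite symmetric $q\times q$ matrices, $|\cdot|$ the determinant. A $\rho$-function is a continuous nondecreasing function of $|u|$ with $\rho(0)=0$, $\sup\rho=1$, strictly increasing on nonnegative $u$ with $\rho(u)<1$. $d_i(B,\Sigma)=((y_i-B'x_i)'\Sigma^{-1}(y_i-B'x_i))^{1/2}$. In the paper $B^{(0)},\Gamma^{(0)}$ are initial estimates $\tilde B_n,\tilde\Sigma_n$ (with $|\tilde\Sigma_n|=1$) and $\hat\sigma_n$ is the M-scale of the Mahalanobis norms $d_i(\tilde B_n,\tilde\Sigma_n)$. *)

(* Defs.v *)
From HB Require Import structures.
From mathcomp Require Import all_boot all_order all_algebra.
From mathcomp Require Import all_classical all_reals all_analysis.
Set Implicit Arguments. Unset Strict Implicit. Unset Printing Implicit Defensive.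
Import Order.TTheory GRing.Theory Num.Theory.
Import numFieldNormedType.Exports.
Local Open Scope ring_scope.

Section Defs.
Variable R : realType.

Definition rho_function (rho : R -> R) : Prop :=
  continuous rho /\
  (forall u, rho u = rho `|u|) /\
  (forall a b, 0 <= a -> a <= b -> rho a <= rho b) /\
  rho 0 = 0 /\
  ((forall u, rho u <= 1) /\ (forall e, 0 < e -> exists u, 1 - e < rho u)) /\
  (forall a b, 0 <= a -> a < b -> rho a < 1 -> rho a < rho b).

Definition posdef (q : nat) (S : 'M[R]_q) : Prop :=
  S^T = S /\ (forall v : 'cV[R]_q, v != 0 -> 0 < (v^T *m S *m v) 0 0).

Definition resid (p q : nat) (B : 'M[R]_(p, q)) (y : 'cV[R]_q) (x : 'cV[R]_p)
  : 'cV[R]_q := y - B^T *m x.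

Definition mahal (p q : nat) (B : 'M[R]_(p, q)) (S : 'M[R]_q)
  (y : 'cV[R]_q) (x : 'cV[R]_p) : R :=
  Num.sqrt (((resid B y x)^T *m invmx S *m resid B y x) 0 0).

Definition sqnorm (q : nat) (v : 'cV[R]_q) : R := (v^T *m v) 0 0.

Definition wls_obj (n p q : nat) (w : 'I_n -> R) (y : 'I_n -> 'cV[R]_q)
  (x : 'I_n -> 'cV[R]_p) (B : 'M[R]_(p, q)) : R :=
  \sum_(i < n) w i * sqnorm (resid B (y i) (x i)).

Definition wcov (n p q : nat) (w : 'I_n -> R) (y : 'I_n -> 'cV[R]_q)
  (x : 'I_n -> 'cV[R]_p) (B : 'M[R]_(p, q)) : 'M[R]_q :=
  \sum_(i < n) w i *: (resid B (y i) (x i) *m (resid B (y i) (x i))^T).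

End Defs.

(* Main.v *)
Require Import Defs.
From HB Require Import structures.
From mathcomp Require Import all_boot all_order all_algebra.
From mathcomp Require Import all_classical all_reals all_analysis.
From mathcomp Require Import ring lra.
Import Order.TTheory GRing.Theory Num.Theory.
Import numFieldNormedType.Exports.
Local Open Scope ring_scope.
Set Implicit Arguments. Unset Strict Implicit. Unset Printing Implicit Defensive.
Section LA.
Variable R : realType.

Definition qf {n} (A : 'M[R]_n) (v : 'cV[R]_n) : R := (v^T *m A *m v) 0 0.

Lemma mxDe m n (A B : 'M[R]_(m,n)) i j : (A + B) i j = A i j + B i j.
Proof. by rewrite mxE. Qed.
Lemma mxBe m n (A B : 'M[R]_(m,n)) i j : (A - B) i j = A i j - B i j.
Proof. by rewrite !mxE. Qed.
Lemma mxNe m n (A : 'M[R]_(m,n)) i j : (- A) i j = - A i j.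
Proof. by rewrite !mxE. Qed.
Lemma mxZe m n a (A : 'M[R]_(m,n)) i j : (a *: A) i j = a * A i j.
Proof. by rewrite !mxE. Qed.

Lemma tr11 (X : 'M[R]_1) : X^T 0 0 = X 0 0.
Proof. by rewrite mxE. Qed.

Lemma qf_block n (a : 'M[R]_1) (b : 'M[R]_(1,n)) (D : 'M[R]_n) (s : 'cV[R]_1) (v : 'cV[R]_n) :
  qf (block_mx a b b^T D) (col_mx s v) =
  (s^T *m a *m s) 0 0 + 2 * (s^T *m b *m v) 0 0 + qf D v.
Proof.
rewrite /qf tr_col_mx mul_row_block mul_row_col !mulmxDl !mxDe.
have -> : v^T *m b^T *m s = (s^T *m b *m v)^T by rewrite !trmx_mul !trmxK mulmxA.
rewrite tr11; ring.
Qed.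

Definition pd {n} (S : 'M[R]_n) := S^T = S /\ (forall v : 'cV[R]_n, v != 0 -> 0 < qf S v).

Lemma chol n (M : 'M[R]_n) : pd M -> exists L : 'M[R]_n, is_trig_mx L /\ M = L *m L^T.
Proof.
elim: n M => [|n IH] M [Msym Mpd].
  by exists 0; split; [exact: mx0_is_trig | apply/matrixP => -[]].
pose M' : 'M[R]_(1 + n) := M.
have Msym' : M'^T = M' by exact: Msym.
set a := ulsubmx M'; set b := ursubmx M'; set D := drsubmx M'.
have hdl : dlsubmx M' = b^T by rewrite /b trmx_ursub Msym'.
have hDs : D^T = D by rewrite /D trmx_drsub Msym'.
have EM : M' = block_mx a b b^T D by rewrite -hdl submxK.
set al := a 0 0.
have ha : a = al%:M by exact: mx11_scalar.
have al0 : 0 < al.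
  have : 0 < qf M' (col_mx (1%:M : 'cV[R]_1) (0 : 'cV[R]_n)).
    have nz : (col_mx (1%:M : 'cV[R]_1) (0 : 'cV[R]_n) != 0 :> 'cV[R]_(1+n)).
      by rewrite col_mx_eq0 (negbTE (matrix_nonzero1 _ 0)).
    exact: (Mpd _ nz).
  rewrite EM qf_block tr_scalar_mx mul1mx mulmx1 mulmx0 /qf trmx0 !mul0mx !mxE.
  by rewrite /al /a !mxE; lra.
pose S := D - al^-1 *: (b^T *m b).
have Spd : pd S.
  split.
    by rewrite /S linearB /= linearZ /= trmx_mul trmxK hDs.
  move=> v v0.
  pose tau := (b *m v) 0 0.
  pose s : 'cV[R]_1 := (- (al^-1 * tau))%:M.
  have : 0 < qf M' (col_mx s v).
    have nz : (col_mx s v != 0 :> 'cV[R]_(1+n)).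
      by rewrite col_mx_eq0 negb_and v0 orbT.
    exact: (Mpd _ nz).
  rewrite EM qf_block ha /s tr_scalar_mx.
  have -> : qf S v = qf D v - al^-1 * tau ^+ 2.
    rewrite /qf /S mulmxBr mulmxBl mxBe -scalemxAr -scalemxAl mxZe.
    congr (_ - _ * _).
    rewrite !mulmxA -trmx_mul -mulmxA /tau.
    set X := b *m v.
    by rewrite {1 2}(mx11_scalar X) tr_scalar_mx -scalar_mxM mxE /= mulr1n expr2.
  rewrite -!scalar_mxM mul_scalar_mx -scalemxAl mxZe mxE /= mulr1n -/tau.
  have E : (- (al^-1 * tau)) * al * (- (al^-1 * tau)) + 2 * (- (al^-1 * tau) * tau)
     = - (al^-1 * tau^+2) by field; exact: lt0r_neq0.
  by rewrite E; lra.
have [K [Ktrig EK]] := IH S Spd.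
pose sq := Num.sqrt al.
have sq0 : 0 < sq by rewrite sqrtr_gt0.
have sqsq : sq * sq = al by rewrite -expr2 sqr_sqrtr // ltW.
have sqn : sq != 0 by exact: lt0r_neq0.
exists (block_mx (sq%:M : 'M[R]_1) 0 (sq^-1 *: b^T) K : 'M[R]_(1+n)).
split.
  have := is_trig_block_mx (sq%:M : 'M[R]_1) (0 : 'M[R]_(1,n)) (sq^-1 *: b^T) K erefl.
  by rewrite eqxx scalar_mx_is_trig Ktrig => H; exact: H.
change (M' = block_mx (sq%:M : 'M[R]_1) 0 (sq^-1 *: b^T) K *m (block_mx (sq%:M : 'M[R]_1) 0 (sq^-1 *: b^T) K)^T).
rewrite EM tr_block_mx mulmx_block; congr block_mx.
- by rewrite trmx0 mulmx0 addr0 tr_scalar_mx -scalar_mxM sqsq ha.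
- by rewrite mul0mx addr0 linearZ /= trmxK mul_scalar_mx scalerA mulfV // scale1r.
- by rewrite trmx0 mulmx0 addr0 tr_scalar_mx mul_mx_scalar scalerA mulfV // scale1r.
- rewrite -EK /S linearZ /= trmxK -scalemxAl -scalemxAr scalerA -invfM sqsq.
  by rewrite addrC subrK.
Qed.

Lemma qf_tr n (A : 'M[R]_n) (v : 'cV[R]_n) : qf A v = \tr (A *m (v *m v^T)).
Proof.
rewrite /qf mulmxA mxtrace_mulC mulmxA.
by rewrite /mxtrace big_ord1.
Qed.

Lemma pd_det_gt0 n (M : 'M[R]_n) : pd M -> 0 < \det M.
Proof.
move=> Mpd; have [L [_ EL]] := chol Mpd.
have dge : 0 <= \det M by rewrite EL det_mulmx det_tr -expr2 sqr_ge0.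
rewrite lt_def dge andbT; apply/negP => /det0P [v v0 vM].
have := Mpd.2 v^T; rewrite trmx_eq0 => /(_ v0).
by rewrite /qf trmxK vM mul0mx mxE ltxx.
Qed.

Lemma pd_unit n (M : 'M[R]_n) : pd M -> M \in unitmx.
Proof. by move=> /pd_det_gt0 h; rewrite unitmxE unitfE lt0r_neq0. Qed.

Lemma pd_diag n (M : 'M[R]_n) : (0 < n)%N -> pd M -> \det M <= (\tr M / n%:R) ^+ n.
Proof.
move=> n0 Mpd; have [L [Lt EL]] := chol Mpd.
have dM : \det M = \prod_i (L i i) ^+ 2.
  by rewrite EL det_mulmx det_tr -expr2 (det_trig Lt) prodrXl.
have Mii : forall i, L i i ^+ 2 <= M i i.
  move=> i; rewrite EL !mxE (bigD1 i) //= mxE -expr2 lerDl.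
  by apply: sumr_ge0 => k _; rewrite mxE -expr2 sqr_ge0.
have : \det M <= \prod_i M i i.
  rewrite dM; apply: ler_prod => i _; by rewrite sqr_ge0 Mii.
move/le_trans; apply.
have := @leif_AGM R _ predT (fun i => M i i) _.
move=> H; have {}H := (H (fun i _ => le_trans (sqr_ge0 _) (Mii i))).1.
have cP : #|@predT 'I_n| = n by rewrite -[RHS]card_ord; apply: eq_card.
rewrite cP in H; rewrite /mxtrace; exact: H.
Qed.


Lemma trdet n (T C : 'M[R]_n) : (0 < n)%N -> pd T -> pd C ->
  \det T * \det C <= (\tr (T *m C) / n%:R) ^+ n.
Proof.
move=> n0 Tpd Cpd; have [L [_ EL]] := chol Tpd.
have Lu : L \in unitmx.
  rewrite unitmxE unitfE; apply/negP => /eqP d0.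
  by have := pd_det_gt0 Tpd; rewrite EL det_mulmx d0 mul0r ltxx.
have Mpd : pd (L^T *m C *m L).
  split.
    by rewrite !trmx_mul trmxK Cpd.1 mulmxA.
  move=> v v0.
  have -> : qf (L^T *m C *m L) v = qf C (L *m v).
    by rewrite /qf trmx_mul !mulmxA.
  apply: Cpd.2; apply/negP => /eqP Lv.
  by move: v0; rewrite -(mulKmx Lu v) Lv mulmx0 eqxx.
have := pd_diag n0 Mpd.
rewrite !det_mulmx det_tr.
have -> : \tr (L^T *m C *m L) = \tr (T *m C).
  by rewrite mxtrace_mulC mulmxA EL.
have -> : \det T = \det L * \det L by rewrite EL det_mulmx det_tr.
by rewrite -mulrA [\det C * _]mulrC mulrA.
Qed.

Lemma pd_inv n (S : 'M[R]_n) : pd S -> pd (invmx S).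
Proof.
move=> Spd; have Su := pd_unit Spd.
split; first by rewrite trmx_inv Spd.1.
move=> v v0.
have -> : qf (invmx S) v = qf S (invmx S *m v).
  by rewrite /qf trmx_mul trmx_inv Spd.1 !mulmxA mulmxKV.
apply: Spd.2; apply/negP => /eqP Sv.
by move: v0; rewrite -(mulKVmx Su v) Sv mulmx0 eqxx.
Qed.

Lemma pd_scale n c (S : 'M[R]_n) : 0 < c -> pd S -> pd (c *: S).
Proof.
move=> c0 Spd; split; first by rewrite linearZ /= Spd.1.
move=> v v0; rewrite /qf -scalemxAr -scalemxAl mxZe.
exact: mulr_gt0 c0 (Spd.2 v v0).
Qed.

Lemma qf_ge0 n (S : 'M[R]_n) v : pd S -> 0 <= qf S v.
Proof.
move=> Spd; have [->|v0] := eqVneq v 0.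
  by rewrite /qf trmx0 !mul0mx mxE.
exact: ltW (Spd.2 v v0).
Qed.

Lemma sum_qf n m (A : 'M[R]_n) (w : 'I_m -> R) (r : 'I_m -> 'cV[R]_n) :
  \sum_i w i * qf A (r i) = \tr (A *m \sum_i w i *: (r i *m (r i)^T)).
Proof.
rewrite mulmx_sumr raddf_sum; apply: eq_bigr => i _.
by rewrite /= -scalemxAr mxtraceZ qf_tr.
Qed.


Definition bil {n} (A : 'M[R]_n) (u v : 'cV[R]_n) : R := (u^T *m A *m v) 0 0.

Lemma qfB n (A : 'M[R]_n) u v : A^T = A ->
  qf A (u - v) = qf A u - 2 * bil A v u + qf A v.
Proof.
move=> As; rewrite /qf /bil.
have -> : (u - v)^T = u^T - v^T by rewrite linearB.
rewrite !mulmxBr !mulmxBl !mxBe.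
have -> : (u^T *m A *m v) 0 0 = (v^T *m A *m u) 0 0.
  by rewrite -tr11 !trmx_mul trmxK As mulmxA.
ring.
Qed.

Lemma qfZ n (A : 'M[R]_n) t u : qf A (t *: u) = t ^+ 2 * qf A u.
Proof.
by rewrite /qf linearZ /= linearZ /= -!scalemxAl !mxZe mulrA expr2.
Qed.

Lemma bilZ n (A : 'M[R]_n) t u v : bil A (t *: u) v = t * bil A u v.
Proof. by rewrite /bil linearZ /= -!scalemxAl mxZe. Qed.

Lemma sqnorm_qf n (v : 'cV[R]_n) : sqnorm v = qf 1%:M v.
Proof. by rewrite /sqnorm /qf mulmx1. Qed.

Lemma wls_normal p q n (w : 'I_n -> R) (y : 'I_n -> 'cV[R]_q) (x : 'I_n -> 'cV[R]_p)
  (B0 : 'M[R]_(p,q)) (T : 'M[R]_q) :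
  (forall i, 0 <= w i) -> (forall B', wls_obj w y x B0 <= wls_obj w y x B') -> pd T ->
  forall B, \sum_i w i * qf T (resid B0 (y i) (x i)) <= \sum_i w i * qf T (resid B (y i) (x i)).
Proof.
move=> w0 Bmin Tpd B.
pose r i := resid B0 (y i) (x i).
pose G (E : 'M[R]_(p,q)) := \sum_i w i * bil 1%:M (E^T *m x i) (r i).
pose H (E : 'M[R]_(p,q)) := \sum_i w i * qf 1%:M (E^T *m x i).
have H0 : forall E, 0 <= H E.
  move=> E; apply: sumr_ge0 => i _; apply: mulr_ge0 => //.
  rewrite /qf mulmx1 mxE; apply: sumr_ge0 => j _; by rewrite mxE -expr2 sqr_ge0.
have G0 : forall E, G E = 0.
  move=> E.
  have key : forall t, 0 <= - 2 * t * G E + t ^+ 2 * H E.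
    move=> t; have := Bmin (B0 + t *: E).
    have -> : wls_obj w y x (B0 + t *: E) = wls_obj w y x B0 - 2 * t * G E + t ^+ 2 * H E.
      rewrite /wls_obj /G /H mulr_sumr mulr_sumr -sumrB -big_split /=.
      apply: eq_bigr => i _.
      have -> : resid (B0 + t *: E) (y i) (x i) = r i - t *: (E^T *m x i).
        by rewrite /r /resid linearD linearZ /= mulmxDl -scalemxAl opprD addrA.
      rewrite !sqnorm_qf qfB ?tr_scalar_mx // qfZ bilZ; ring.
    lra.
  pose t := G E / (H E + 1).
  have H1 : 0 < H E + 1 by have := H0 E; lra.
  have tE : G E = t * (H E + 1) by rewrite /t divfK // lt0r_neq0.
  have := key t; rewrite tE => h.
  have : t ^+ 2 <= 0 by have := H0 E; nra.
  move=> h2; have t0 : t = 0 by apply/eqP; rewrite -sqrf_eq0 eq_le h2 sqr_ge0.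
  by rewrite t0 mul0r.
pose D := B - B0.
have E : \sum_i w i * qf T (resid B (y i) (x i)) =
   \sum_i w i * qf T (r i) - 2 * G (D *m T) + \sum_i w i * qf T (D^T *m x i).
  rewrite /G mulr_sumr -sumrB -big_split /=; apply: eq_bigr => i _.
  have -> : resid B (y i) (x i) = r i - D^T *m x i.
    by rewrite /r /resid /D linearB /= mulmxBl opprB addrA subrK.
  rewrite qfB ?Tpd.1 //.
  have -> : bil T (D^T *m x i) (r i) = bil 1%:M ((D *m T)^T *m x i) (r i).
    by rewrite /bil !trmx_mul !trmxK mulmx1 !mulmxA.
  ring.
rewrite E G0 mulr0 subr0 lerDl.
by apply: sumr_ge0 => i _; apply: mulr_ge0 => //; apply: qf_ge0.
Qed.

Lemma wcov_pd p q n (w : 'I_n -> R) (y : 'I_n -> 'cV[R]_q) (x : 'I_n -> 'cV[R]_p)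
  (B : 'M[R]_(p,q)) :
  (forall i, 0 <= w i) -> 0 < \det (wcov w y x B) -> pd (wcov w y x B).
Proof.
move=> w0 d0; set C := wcov w y x B.
pose r i := resid B (y i) (x i).
have Csym : C^T = C.
  rewrite /C /wcov linear_sum /=; apply: eq_bigr => i _.
  by rewrite linearZ /= trmx_mul trmxK.
split => // v v0.
pose tau i := (v^T *m r i) 0 0.
have rt : forall i, (r i)^T *m v = (tau i)%:M.
  by move=> i; rewrite (mx11_scalar ((r i)^T *m v)) -tr11 trmx_mul trmxK.
have qC : qf C v = \sum_i w i * tau i ^+ 2.
  rewrite /qf /C /wcov mulmx_sumr mulmx_suml summxE; apply: eq_bigr => i _.
  rewrite -scalemxAr -scalemxAl mxZe -/(r i) !mulmxA -(mulmxA _ _ v) rt.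
  by rewrite mul_mx_scalar mxZe /tau expr2 mulrC.
have ge : 0 <= qf C v.
  by rewrite qC; apply: sumr_ge0 => i _; apply: mulr_ge0 => //; exact: sqr_ge0.
rewrite lt_def ge andbT; apply/negP => /eqP q00.
have sum0 : \sum_i w i * tau i ^+ 2 = 0 by rewrite -qC q00.
have wt : forall i, w i * tau i = 0.
  move=> i.
  have := @psumr_eq0P _ _ predT (fun i => w i * tau i ^+ 2)
    (fun j _ => mulr_ge0 (w0 j) (sqr_ge0 (tau j))) sum0 i isT.
  move/eqP; rewrite mulf_eq0 expf_eq0 /= => /orP [] /eqP ->.
    by rewrite mul0r.
  by rewrite mulr0.
have Cv : C *m v = 0.
  rewrite /C /wcov mulmx_suml; apply: big1 => i _.
  by rewrite -scalemxAl -mulmxA -/(r i) rt mul_mx_scalar scalerA wt scale0r.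
have : \det C == 0.
  apply/det0P; exists v^T; first by rewrite trmx_eq0.
  by rewrite -{1}Csym -trmx_mul Cv trmx0.
by rewrite (gt_eqF d0).
Qed.

End LA.
Lemma concav (R : realType) (rho psi W : R -> R) :
  (forall u, is_derive u (1:R) rho (psi u)) ->
  (forall u, u != 0 -> W u = psi u / u) ->
  (forall u v, `|u| <= `|v| -> W v <= W u) ->
  forall a b, 0 <= a -> 0 <= b -> rho b <= rho a + W a / 2 * (b ^+ 2 - a ^+ 2).
Proof.
move=> hd hW hmon a b a0 b0.
set c := W a / 2.
pose h := fun u : R => rho u - c * (u * u).
have hh : forall u, is_derive u (1:R) h (psi u - c * (u + u)).
  move=> u; rewrite /h.
  have -> : c * (u + u) = c * (u *: 1 + u *: 1) by rewrite !scaler1.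
  exact: is_deriveB.
have hc : forall x y : R, {within `[x, y], continuous h}%classic.
  move=> x y; apply: derivable_within_continuous => z _.
  exact: (@ex_derive _ _ _ _ _ _ _ (hh z)).
have hp : forall u, 0 < u -> psi u - c * (u + u) = u * (W u - W a).
  move=> u u0; rewrite hW ?gt_eqF // /c; field; exact: lt0r_neq0.
suff : h b <= h a.
  rewrite /h => hba.
  rewrite -!expr2 in hba. rewrite mulrBr. lra.
case: (ltgtP a b) => [ab|ba|->]; last by [].
- have [z zin E] := MVT ab (fun x _ => hh x) (hc a b).
  move: zin; rewrite in_itv /= => /andP[az zb].
  have z0 : 0 < z by exact: le_lt_trans a0 az.
  rewrite -subr_le0 E hp //.
  apply: mulr_le0_ge0; last by rewrite subr_ge0 ltW.
  apply: mulr_ge0_le0; first exact: ltW.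
  by rewrite subr_le0; apply: hmon; rewrite (ger0_norm a0) (ger0_norm (ltW z0)) ltW.
- have [z zin E] := MVT ba (fun x _ => hh x) (hc b a).
  move: zin; rewrite in_itv /= => /andP[bz za].
  have z0 : 0 < z by exact: le_lt_trans b0 bz.
  rewrite -subr_ge0 E hp //.
  apply: mulr_ge0; last by rewrite subr_ge0 ltW.
  apply: mulr_ge0; first exact: ltW.
  by rewrite subr_ge0; apply: hmon; rewrite (ger0_norm a0) (ger0_norm (ltW z0)) ltW.
Qed.
Lemma W_ge0 (R : realType) (rho psi W : R -> R) :
  (forall a b, 0 <= a -> a <= b -> rho a <= rho b) ->
  (forall u, is_derive u (1:R) rho (psi u)) ->
  (forall u, u != 0 -> W u = psi u / u) ->
  (forall u v, `|u| <= `|v| -> W v <= W u) ->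
  forall u, 0 <= W u.
Proof.
move=> hm hd hW hmon.
have key : forall v, 0 <= v -> 0 <= W v.
  move=> v v0.
  have h1 := concav hd hW hmon v0 (addr_ge0 v0 ler01).
  have h2 : rho v <= rho (v + 1) by apply: hm => //; rewrite lerDl.
  have h := le_trans h2 h1.
  rewrite lerDl in h.
  have hp : 0 < (v + 1) ^+ 2 - v ^+ 2 by rewrite !expr2; nra.
  move: h; rewrite pmulr_lge0 // => h.
  by move: h; rewrite pmulr_lge0 // invr_gt0 ltr0n.
move=> u; apply: le_trans (key _ (normr_ge0 u)) _; apply: hmon.
by rewrite normr_id.
Qed.

Theorem theorem7 (R : realType) (n p q : nat)
  (y : 'I_n -> 'cV[R]_q) (x : 'I_n -> 'cV[R]_p)
  (rho1 psi1 W : R -> R) (sigma : R)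
  (B : nat -> 'M[R]_(p, q)) (Sigma : nat -> 'M[R]_q) (Gamma0 : 'M[R]_q) :
  (0 < q)%N ->
  rho_function rho1 ->
  (forall u : R, is_derive u (1 : R) rho1 (psi1 u)) ->
  (forall u, u != 0 -> W u = psi1 u / u) ->
  0 < sigma ->
  posdef Gamma0 -> \det Gamma0 = 1 ->
  Sigma 0%N = sigma ^+ 2 *: Gamma0 ->
  (forall k : nat,
     let w := fun i => W (mahal (B k) (Sigma k) (y i) (x i)) in
     (forall B' : 'M[R]_(p, q), wls_obj w y x (B k.+1) <= wls_obj w y x B') /\
     0 < \det (wcov w y x (B k.+1)) /\
     Sigma k.+1 = (sigma ^+ 2 / powR (\det (wcov w y x (B k.+1))) (q%:R^-1))
                    *: wcov w y x (B k.+1)) ->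
  (* W nonincreasing in |u| *)
  (forall u v, `|u| <= `|v| -> W v <= W u) ->
  forall k : nat,
    \sum_(i < n) rho1 (mahal (B k.+1) (Sigma k.+1) (y i) (x i))
    <= \sum_(i < n) rho1 (mahal (B k) (Sigma k) (y i) (x i)).
Proof.
move=> q0 Hrho Hd HW sig0 G0pd G0det S0 Hstep Wmon.
have [_ [_ [Hmono _]]] := Hrho.
have Wge0 := W_ge0 Hmono Hd HW Wmon.
have s20 : 0 < sigma ^+ 2 by exact: exprn_gt0.
have inv : forall k, pd (Sigma k) /\ \det (Sigma k) = (sigma ^+ 2) ^+ q.
  elim=> [|k _].
    rewrite S0; split; first by apply: pd_scale => //; exact: G0pd.
    by rewrite detZ G0det mulr1.
  have [_ [Cdet Sk]] := Hstep k.
  set C := wcov _ y x (B k.+1) in Cdet Sk.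
  have Cpd : pd C by apply: wcov_pd => // i; exact: Wge0.
  set pC := powR (\det C) q%:R^-1 in Sk.
  have pC0 : 0 < pC by exact: powR_gt0.
  have pCq : pC ^+ q = \det C.
    rewrite -powR_mulrn ?ltW // /pC -powRrM mulVf ?powRr1 ?ltW //.
    by rewrite pnatr_eq0 -lt0n.
  rewrite Sk; split.
    by apply: pd_scale => //; apply: divr_gt0.
  by rewrite detZ exprMn exprVn pCq -mulrA mulVf ?mulr1 // gt_eqF.
move=> k.
have [Spd Sdet] := inv k.
have [Spd' _] := inv k.+1.
have [Bmin [Cdet Sk]] := Hstep k.
set wf := (fun i => W (mahal (B k) (Sigma k) (y i) (x i))) in Bmin Cdet Sk.
set C := wcov wf y x (B k.+1) in Cdet Sk.
have Cpd : pd C by apply: wcov_pd => // i; exact: Wge0.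
set pC := powR (\det C) q%:R^-1 in Sk.
have pC0 : 0 < pC by exact: powR_gt0.
have pCq : pC ^+ q = \det C.
  rewrite -powR_mulrn ?ltW // /pC -powRrM mulVf ?powRr1 ?ltW //.
  by rewrite pnatr_eq0 -lt0n.
pose T := invmx (Sigma k).
have Tpd : pd T := pd_inv Spd.
pose T' := invmx (Sigma k.+1).
have T'pd : pd T' := pd_inv Spd'.
pose ro i := resid (B k) (y i) (x i).
pose rn i := resid (B k.+1) (y i) (x i).
have dold : forall i, mahal (B k) (Sigma k) (y i) (x i) ^+ 2 = qf T (ro i).
  by move=> i; rewrite /mahal sqr_sqrtr //; exact: (qf_ge0 _ Tpd).
have dnew : forall i, mahal (B k.+1) (Sigma k.+1) (y i) (x i) ^+ 2 = qf T' (rn i).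
  by move=> i; rewrite /mahal sqr_sqrtr //; exact: (qf_ge0 _ T'pd).
have step : forall i, rho1 (mahal (B k.+1) (Sigma k.+1) (y i) (x i)) <=
    rho1 (mahal (B k) (Sigma k) (y i) (x i)) + wf i / 2 * (qf T' (rn i) - qf T (ro i)).
  by move=> i; rewrite -dold -dnew; apply: concav => //; exact: sqrtr_ge0.
have key : \sum_i wf i * qf T' (rn i) <= \sum_i wf i * qf T (ro i).
  have Cu := pd_unit Cpd.
  have qpos : 0 < q%:R :> R by rewrite ltr0n.
  have newE : \sum_i wf i * qf T' (rn i) = pC / sigma ^+ 2 * q%:R.
    rewrite (sum_qf T' wf rn).
    have -> : \sum_i wf i *: (rn i *m (rn i)^T) = C by [].
    rewrite /T' Sk invmxZ; last by rewrite -Sk; exact: pd_unit Spd'.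
    by rewrite -scalemxAl mxtraceZ mulVmx // mxtrace1 invf_div.
  have oldge : \sum_i wf i * qf T (rn i) <= \sum_i wf i * qf T (ro i).
    exact: (wls_normal (fun i => Wge0 _) Bmin Tpd (B k)).
  have trE : \sum_i wf i * qf T (rn i) = \tr (T *m C) by rewrite (sum_qf T wf rn).
  have tr0 : 0 <= \tr (T *m C).
    rewrite -trE; apply: sumr_ge0 => i _; apply: mulr_ge0; first exact: Wge0.
    exact: qf_ge0.
  have td := trdet q0 Tpd Cpd.
  rewrite /T det_inv Sdet -pCq in td.
  have h : pC / sigma ^+ 2 <= \tr (T *m C) / q%:R.
    rewrite -(ler_pXn2r q0); last 2 first.
    - by rewrite nnegrE divr_ge0 // ltW.
    - by rewrite nnegrE divr_ge0 // ler0n.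
    by rewrite exprMn exprVn mulrC.
  rewrite newE -trE in h *.
  apply: le_trans oldge.
  by have := ler_wpM2r (ltW qpos) h; rewrite divfK ?gt_eqF.
apply: le_trans (ler_sum _ (fun i _ => step i)) _.
rewrite big_split /=.
have E : \sum_i wf i / 2 * (qf T' (rn i) - qf T (ro i)) =
  2^-1 * (\sum_i wf i * qf T' (rn i)) - 2^-1 * (\sum_i wf i * qf T (ro i)).
  rewrite !mulr_sumr -sumrB; apply: eq_bigr => i _; ring.
rewrite E; lra.
Qed.
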